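(* Let $G_1,G_2$ be directed graphs on $[n]$ without self-loops with $\mathcal{P}(G_1)=\mathcal{P}(G_2)$, and let $\pi$ be a permutation of $[n]$ such that $I+B_{G_2}=P_\pi(I+B_{G_1})$. Write $\pi=c_1c_2\cdots c_k$ as a product of disjoint cycles $c_j=(i^j_1,i^j_2,\dots,i^j_{n_j})$ with $n_j\ge2$ (fixed points omitted). Then for each $j\in[k]$, $x_{i^j_1}\to x_{i^j_2}\to\cdots\to x_{i^j_{n_j}}\to x_{i^j_1}$ is a directed cycle in $G_1$, and $x_{i^j_1}\leftarrow x_{i^j_2}\leftarrow\cdots\leftarrow x_{i^j_{n_j}}\leftarrow x_{i^j_1}$ is a directed cycle in $G_2$.
   Context: For a directed graph $G$ on $[n]$ (vertex $i$ identified with variable $x_i$) without self-loops, $B_G\in\{0,1\}^{n\times n}$ has $[B_G]_{ij}=1$ iff there is an edge $j\to i$. $P_\pi$ is the permutation matrix whose $i$-th row is the standard basis row vector $u_{\pi(i)}$, so the $i$-th row of $P_\pi A$ is the $\pi(i)$-th row of $A$. A cycle $(i_1,\dots,i_\ell)$ of a permutation maps $i_r\mapsto i_{r+1}$ and $i_\ell\mapsto i_1$. $\mathcal{P}(G)$ is the set of all distributions of $\mathbf{x}=(I-W)^{-1}\mathbf{e}$ where $W$ has nonzero pattern exactly that of $B_G$, $I-W$ is invertible, and $\mathbf{e}$ has jointly independent components with at most one Gaussian. *)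

(* Defs.v *)
From HB Require Import structures.
From mathcomp Require Import all_boot all_order all_algebra all_fingroup.
From mathcomp Require Import all_classical all_reals all_analysis.
From mathcomp Require Import normal_distribution.
Set Implicit Arguments. Unset Strict Implicit. Unset Printing Implicit Defensive.
Import Order.TTheory GRing.Theory Num.Theory.
Local Open Scope classical_set_scope.
Local Open Scope ring_scope.

(* A directed graph on [n] = 'I_n: G i j means there is an edge i -> j. *)
Definition digraph (n : nat) := rel 'I_n.

Definition no_self_loops n (G : digraph n) := forall i, ~~ G i i.

Definition adjB (R : pzRingType) n (G : digraph n) : 'M[R]_n :=
  \matrix_(i, j) (G j i)%:R.

(* P_pi: i-th row is u_{pi(i)}, i.e. (P_pi) i j = (pi i == j).
   This is MathComp's perm_mx. *)
Definition Pperm (R : pzRingType) n (pi : 'S_n) : 'M[R]_n := perm_mx pi.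

Definition has_pattern (R : realType) n (G : digraph n) (W : 'M[R]_n) :=
  forall i j, (W i j != 0) = G j i.

Definition mutually_independent (R : realType) d (T : measurableType d)
  (P : probability T R) n (e : 'I_n -> T -> R) :=
  forall S : {set 'I_n}, forall A : 'I_n -> set R, (forall i, measurable (A i)) ->
    P (\bigcap_(i in [set i | i \in S]) (e i @^-1` A i)) =
    (\prod_(i in S) P (e i @^-1` A i))%E.

Definition is_gaussian (R : realType) d (T : measurableType d)
  (P : probability T R) (X : T -> R) :=
  exists (m s : R), s != 0 /\
    forall A : set R, measurable A -> P (X @^-1` A) = normal_prob m s A.

(* A distribution on R^n is represented by its joint CDF. *)
Definition joint_cdf (R : realType) (n : nat) := ('I_n -> R) -> \bar R.

Definition model_class (R : realType) n (G : digraph n) : set (joint_cdf R n) :=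
  [set F | exists (d : measure_display) (T : measurableType d)
      (P : probability T R) (W : 'M[R]_n) (e : 'I_n -> T -> R),
      [/\ has_pattern G W, (1%:M - W) \in unitmx,
          (forall i, measurable_fun setT (e i)) /\ mutually_independent P e,
          (forall i j, is_gaussian P (e i) -> is_gaussian P (e j) -> i = j) &
          let x := fun w => invmx (1%:M - W) *m (\col_i e i w) in
          F = fun t => P [set w | forall i, x w i ord0 <= t i]]].

(* Main.v *)
Require Import Defs.
From HB Require Import structures.
From mathcomp Require Import all_boot all_order all_algebra all_fingroup.
From mathcomp Require Import all_classical all_reals all_analysis.
Import Order.TTheory GRing.Theory Num.Theory.
Local Open Scope ring_scope.

Lemma iter_fix n (pi : 'S_n) i x : pi (iter i pi x) = iter i pi x -> pi x = x.
Proof.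
elim: i => [//|i IH] /= h; apply: IH; exact: perm_inj h.
Qed.

Theorem proposition3 (R : realType) (n : nat) (G1 G2 : digraph n)
  (hG1 : no_self_loops G1) (hG2 : no_self_loops G2)
  (hP : model_class (R:=R) G1 = model_class (R:=R) G2)
  (pi : 'S_n)
  (hpi : 1%:M + adjB R G2 = Pperm R pi *m (1%:M + adjB R G1)) :
  forall x : 'I_n, pi x != x ->
    let c := traject (fun y => pi y) x (fingraph.order (fun y => pi y) x) in
    path.cycle G1 c /\ path.cycle (fun a b => G2 b a) c.
Proof.
have key : forall y, pi y != y -> G1 y (pi y) && G2 (pi y) y.
  move=> y hy.
  have E i j : (1%:M + adjB R G2) i j = (1%:M + adjB R G1) (pi i) j.
    by rewrite hpi /Pperm -row_permE mxE.
  have := E y y; have := E y (pi y).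
  rewrite !mxE !eqxx (negbTE hy) eq_sym (negbTE hy) (negbTE (hG2 y)) (negbTE (hG1 (pi y))) /=.
  rewrite !mulr1n !mulr0n !add0r !addr0 => h1 h2.
  case: (G1 y (pi y)) h2 => /=; case: (G2 (pi y) y) h1 => //=.
  - by move=> /esym/eqP; rewrite oner_eq0.
  - by move=> _ /eqP; rewrite oner_eq0.
  - by move=> _ /eqP; rewrite oner_eq0.
move=> x hx c.
have hall : all (fun y => pi y != y) c.
  apply/allP => y /trajectP [i _ ->]; apply: contra hx => /eqP h.
  by apply/eqP; exact: (@iter_fix n pi i x h).
have hc : fcycle (fun y => pi y) c by apply: cycle_orbit; apply: perm_inj.
split.
  apply: (sub_in_cycle _ hall hc) => a b /= ha _ /eqP <-.
  by case/andP: (key a ha).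
apply: (sub_in_cycle _ hall hc) => a b /= ha _ /eqP <-.
by case/andP: (key a ha).
Qed.
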